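(* Let $N \ge 1$. Then: (1) $f(N,1)=0$. (2) $f(N+1,\Delta) \geq f(N,\Delta)+1$ for $N \geq \Delta \geq 2$. (3) $f(N,\Delta+1) \geq f(N,\Delta)+1$ for $\Delta \ge 1$ and $N > \binom{\Delta+1}{2}$. (4) For $\Delta+1 \le N$: if $\Delta > \frac{N}{2}$ then $f(N,\Delta+1) \geq f(N,\Delta)$, and if $\Delta > \lceil \frac{N}{2} \rceil$ then $f(N,\Delta+1) \geq f(N,\Delta)+1$.
   Context: All graphs are finite and simple; $L(G)$ is the line graph of $G$; $e(\cdot)$, $\Delta(\cdot)$, $\delta(\cdot)$ denote number of edges, maximum degree and minimum degree. For integers $N \ge \Delta \ge 1$, $f(N,\Delta) = \max\{ e(L(G)) : e(G)=N, \Delta(G)=\Delta, \delta(G)\geq 1\}$, the maximum over all simple graphs $G$. *)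

(* Defs.v *)
From mathcomp Require Import all_boot all_order.
From mathcomp Require Import boolp.
Set Implicit Arguments. Unset Strict Implicit. Unset Printing Implicit Defensive.

(* A finite simple graph on a finite vertex type T is given by its edge set
   E : {set {set T}}, every edge being a 2-element subset of T. *)
Definition simple_graph (T : finType) (E : {set {set T}}) : Prop :=
  forall e, e \in E -> #|e| = 2.

Definition deg (T : finType) (E : {set {set T}}) (v : T) : nat :=
  #|[set e in E | v \in e]|.

Definition maxdeg (T : finType) (E : {set {set T}}) : nat :=
  \max_(v : T) deg E v.

Definition mindeg_ge1 (T : finType) (E : {set {set T}}) : Prop :=
  forall v : T, 0 < deg E v.

(* Edge set of the line graph L(G): its vertices are the edges of G, and two
   distinct edges are adjacent iff they share an endpoint. *)
Definition line_edges (T : finType) (E : {set {set T}}) : {set {set {set T}}} :=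
  [set F : {set {set T}} | [&& F \subset E, #|F| == 2 &
     [forall e1 in F, forall e2 in F, e1 :&: e2 != set0]]].

Definition achievable (N D k : nat) : Prop :=
  exists (T : finType) (E : {set {set T}}),
    [/\ simple_graph E, #|E| = N, maxdeg E = D, mindeg_ge1 E
      & #|line_edges E| = k].

(* f(N, D) = max of e(L(G)) over such graphs.  Since e(L(G)) <= binom(N,2)
   < N*N + 1, restricting the maximum to k <= N*N loses nothing. *)
Definition f (N D : nat) : nat :=
  \max_(k < (N * N).+1 | `[< achievable N D k >]) k.

(* Main.v *)
Require Import Defs.
From mathcomp Require Import all_boot all_order.
From mathcomp Require Import boolp.
From mathcomp Require Import zify.
Set Implicit Arguments. Unset Strict Implicit. Unset Printing Implicit Defensive.

Definition lsum (T : finType) (E : {set {set T}}) := \sum_(v : T) 'C(deg E v, 2).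

Lemma edge_eq (T : finType) (E : {set {set T}}) e x y :
  simple_graph E -> e \in E -> x \in e -> y \in e -> x != y -> e = [set x; y].
Proof.
move=> sE eE xe ye nxy; apply/esym/eqP; rewrite eqEcard cards2 nxy (sE _ eE).
apply/andP; split => //; apply/subsetP=> z; rewrite !inE => /orP[] /eqP ->; done.
Qed.

Definition Lv (T : finType) (E : {set {set T}}) v :=
  [set F : {set {set T}} | F \subset [set e in E | v \in e] & #|F| == 2].

Lemma Lv_line (T : finType) (E : {set {set T}}) v F : F \in Lv E v -> F \in line_edges E.
Proof.
rewrite !inE => /andP[sF ->]; rewrite /=.
apply/andP; split.
  by apply/subsetP=> e /(subsetP sF); rewrite inE => /andP[].
apply/forallP=> e1; apply/implyP=> e1F; apply/forallP=> e2; apply/implyP=> e2F.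
apply/set0Pn; exists v; move: (subsetP sF _ e1F) (subsetP sF _ e2F).
by rewrite !inE => /andP[_ ->] /andP[_ ->].
Qed.

Lemma line_Lv (T : finType) (E : {set {set T}}) F : F \in line_edges E -> exists v, F \in Lv E v.
Proof.
rewrite inE => /and3P[sFE /cards2P[e1 [e2 [ne eF]]] /forallP H].
have e1F : e1 \in F by rewrite eF !inE eqxx.
have e2F : e2 \in F by rewrite eF !inE eqxx orbT.
have := H e1; rewrite e1F /= => /forallP /(_ e2); rewrite e2F /=.
case/set0Pn=> v; rewrite inE => /andP[v1 v2].
exists v; rewrite !inE eF cards2 ne eqxx andbT.
by apply/subsetP=> e; rewrite !inE => /orP[]/eqP->; rewrite ?v1 ?v2 andbT; apply: (subsetP sFE); rewrite eF !inE eqxx ?orbT.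
Qed.

Lemma Lv_uniq (T : finType) (E : {set {set T}}) u v F :
  simple_graph E -> F \in Lv E u -> F \in Lv E v -> u = v.
Proof.
move=> sE; rewrite !inE => /andP[sFu /cards2P[e1 [e2 [ne eF]]]] /andP[sFv _].
apply/eqP/negPn/negP => nuv; move/negP: ne; apply.
have e1F : e1 \in F by rewrite eF !inE eqxx.
have e2F : e2 \in F by rewrite eF !inE eqxx orbT.
move: (subsetP sFu _ e1F) (subsetP sFv _ e1F) (subsetP sFu _ e2F) (subsetP sFv _ e2F).
rewrite !inE => /andP[E1 u1] /andP[_ v1] /andP[E2 u2] /andP[_ v2].
by rewrite (edge_eq sE E1 u1 v1 nuv) (edge_eq sE E2 u2 v2 nuv).
Qed.

Lemma line_sum (T : finType) (E : {set {set T}}) : simple_graph E -> #|line_edges E| = lsum E.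
Proof.
move=> sE; rewrite /lsum.
have cL v : 'C(deg E v, 2) = \sum_F (F \in Lv E v).
  rewrite /deg -cards_draws -sum1_card big_mkcond /=.
  by apply: eq_bigr => F _; rewrite /Lv; case: (_ \in _).
rewrite (eq_bigr _ (fun v _ => cL v)) exchange_big /= -sum1_card big_mkcond /=.
apply: eq_bigr => F _; case: ifP => [/line_Lv [v Fv]|nF].
  rewrite (bigD1 v) //= Fv big1 // => u /eqP nuv; case Fu: (F \in Lv E u) => //.
  by exfalso; apply: nuv; apply: Lv_uniq Fu Fv.
by rewrite big1 // => v _; case Fv: (F \in Lv E v) => //; move/Lv_line: Fv; rewrite nF.
Qed.

Lemma degU1 (T : finType) (E : {set {set T}}) h z :
  h \notin E -> deg (h |: E) z = (z \in h) + deg E z.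
Proof.
move=> hE; rewrite /deg.
case: (boolP (z \in h)) => zh /=.
  have -> : [set e in h |: E | z \in e] = h |: [set e in E | z \in e].
    by apply/setP=> e; rewrite !inE; case: eqP => // ->; rewrite zh.
  by rewrite cardsU1 inE (negbTE hE).
apply: eq_card => e; rewrite !inE; case: eqP => // ->.
by rewrite (negbTE zh) (negbTE hE).
Qed.

Lemma degD1 (T : finType) (E : {set {set T}}) g z :
  g \in E -> deg E z = (z \in g) + deg (E :\ g) z.
Proof.
move=> gE; rewrite /deg (cardsD1 g) inE gE /=; congr (_ + _).
by apply: eq_card => e; rewrite !inE andbA.
Qed.

Lemma deg_gt0 (T : finType) (E : {set {set T}}) e v : e \in E -> v \in e -> 0 < deg E v.
Proof. by move=> eE ve; rewrite /deg card_gt0; apply/set0Pn; exists e; rewrite inE eE ve. Qed.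

Lemma deg_le_max (T : finType) (E : {set {set T}}) z : deg E z <= maxdeg E.
Proof. exact: (@leq_bigmax _ (fun z => deg E z) z). Qed.

Lemma maxdeg_eq (T : finType) (E : {set {set T}}) v m :
  (forall z, deg E z <= m) -> deg E v = m -> maxdeg E = m.
Proof.
move=> H dv; apply/eqP; rewrite eqn_leq; apply/andP; split.
  by apply/bigmax_leqP => z _; apply: H.
by rewrite -dv deg_le_max.
Qed.

Lemma maxdeg_ex (T : finType) (E : {set {set T}}) :
  0 < maxdeg E -> exists v, deg E v = maxdeg E.
Proof.
move=> m0; case: (boolP [exists v, deg E v == maxdeg E]) => [/existsP[v /eqP]|]; first by exists v.
rewrite negb_exists => /forallP H; exfalso.
suff : maxdeg E <= (maxdeg E).-1 by lia.
apply/bigmax_leqP => z _; have := H z; have := deg_le_max E z; lia.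
Qed.

Lemma transfer (T T' : finType) (E : {set {set T}}) (E' : {set {set T'}}) (h : T' -> T) :
  injective h -> (forall x, deg E' x = deg E (h x)) ->
  (forall v, v \notin h @: [set: T'] -> deg E v = 0) ->
  maxdeg E' = maxdeg E /\ lsum E' = lsum E.
Proof.
move=> ih dh d0; split.
  apply/eqP; rewrite eqn_leq; apply/andP; split.
    by apply/bigmax_leqP => x _; rewrite dh deg_le_max.
  apply/bigmax_leqP => v _; case: (boolP (v \in h @: [set: T'])).
    by case/imsetP => x _ ->; rewrite -dh deg_le_max.
  by move/d0 ->.
rewrite /lsum [in RHS](bigID (mem (h @: [set: T']))) /=.
rewrite [X in _ = _ + X]big1 ?addn0; last by move=> v /d0 ->.
rewrite big_imset /=; last by move=> x y _ _; apply: ih.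
by apply: eq_big => [x|x _]; rewrite ?inE ?dh.
Qed.

Definition ach' (N D k : nat) : Prop :=
  exists (T : finType) (E : {set {set T}}),
    [/\ simple_graph E, #|E| = N, maxdeg E = D & lsum E = k].

Lemma lift_graph (T : finType) (E : {set {set T}}) : simple_graph E ->
  exists (T0 : finType) (E0 : {set {set T0}}) (w : T0),
   [/\ simple_graph E0, #|E0| = #|E|, maxdeg E0 = maxdeg E, lsum E0 = lsum E & deg E0 w = 0].
Proof.
move=> sE.
pose up (e : {set T}) : {set option T} := [set Some x | x in e].
have upi : injective up by apply: imset_inj; apply: Some_inj.
pose E0 := [set up e | e in E].
have dS z : deg E0 (Some z) = deg E z.
  rewrite /deg -(card_imset _ upi); apply: eq_card => e0; rewrite !inE.
  apply/andP/imsetP => [[/imsetP[e eE ->]]|[e]].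
    by rewrite (mem_imset _ _ Some_inj) => ze; exists e; rewrite // inE eE ze.
  by rewrite inE => /andP[eE ze] ->; rewrite (mem_imset _ _ Some_inj) ze imset_f.
have dN : deg E0 None = 0.
  apply/eqP; rewrite cards_eq0; apply/eqP/setP => e0; rewrite !inE.
  apply/negbTE/andP => [[/imsetP[e _ ->] /imsetP[x _]]] //.
have d0 : forall v, v \notin Some @: [set: T] -> deg E0 v = 0.
  by case=> [z|] // /negP[]; apply: imset_f; rewrite inE.
have [md ls] := @transfer _ _ E0 E Some Some_inj (fun z => esym (dS z)) d0.
exists (option T), E0, None; split => //.
  by move=> e0 /imsetP[e eE ->]; rewrite card_imset ?sE //; apply: Some_inj.
by rewrite card_imset.
Qed.

Lemma cleanup (T : finType) (E : {set {set T}}) : simple_graph E ->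
  exists (T1 : finType) (E1 : {set {set T1}}),
   [/\ simple_graph E1, #|E1| = #|E|, maxdeg E1 = maxdeg E, lsum E1 = lsum E & mindeg_ge1 E1].
Proof.
move=> sE.
pose T1 := {x : T | 0 < deg E x}.
pose down (e : {set T}) : {set T1} := [set x : T1 | val x \in e].
have vd e : e \in E -> val @: down e = e.
  move=> eE; apply/setP => v; apply/imsetP/idP => [[x]|ve].
    by rewrite inE => xe ->.
  exists (exist _ v (deg_gt0 eE ve)) => //; by rewrite inE.
have di : {in E &, injective down}.
  by move=> e1 e2 e1E e2E eq; rewrite -(vd _ e1E) -(vd _ e2E) eq.
pose E1 := down @: E.
have dd x : deg E1 x = deg E (val x).
  rewrite /deg -(card_in_imset (f := down) (D := [set e in E | val x \in e])); last first.
    by move=> e1 e2; rewrite !inE => /andP[e1E _] /andP[e2E _]; apply: di.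
  apply: eq_card => e1; rewrite !inE.
  apply/andP/imsetP => [[/imsetP[e eE ->]]|[e]].
    by rewrite inE => xe; exists e; rewrite // inE eE xe.
  by rewrite inE => /andP[eE xe] ->; rewrite imset_f // inE.
have [md ls] : maxdeg E1 = maxdeg E /\ lsum E1 = lsum E.
  apply: (transfer val_inj dd) => v; apply: contraNeq; rewrite -lt0n => H.
  by apply/imsetP; exists (exist _ v H).
exists T1, E1; split => //.
- move=> e1 /imsetP[e eE ->]; rewrite -(sE _ eE) -{2}(vd _ eE) card_imset //; apply: val_inj.
- by rewrite card_in_imset.
- by move=> x; rewrite dd; apply: (valP x).
Qed.

Lemma ach_ach' N D k : achievable N D k -> ach' N D k.
Proof.
by case=> T [E [sE cE mE _ lE]]; exists T, E; split => //; rewrite -line_sum.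
Qed.

Lemma ach'_ach N D k : ach' N D k -> achievable N D k.
Proof.
case=> T [E [sE cE mE lE]]; have [T1 [E1 [s1 c1 m1 l1 d1]]] := cleanup sE.
by exists T1, E1; split => //; rewrite ?c1 ?m1 // line_sum // l1.
Qed.

Lemma line_le (T : finType) (E : {set {set T}}) : #|line_edges E| <= #|E| * #|E|.
Proof.
apply: leq_trans (_ : 'C(#|E|, 2) <= _).
  rewrite -cards_draws; apply: subset_leq_card; apply/subsetP => F.
  by rewrite !inE => /and3P[-> -> _].
rewrite bin2; apply: leq_trans (_ : #|E| * (#|E|).-1 <= _).
  by set m := _ * _; lia.
by apply: leq_mul => //; apply: leq_pred.
Qed.

Lemma f_ge N D k : achievable N D k -> k <= f N D.
Proof.
move=> H; have hk : k < (N * N).+1.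
  by case: H => T [E [_ <- _ _ <-]]; rewrite ltnS line_le.
by apply: (@leq_bigmax_cond _ _ _ (Ordinal hk)) => /=; apply/asboolP.
Qed.

Lemma f_att N D k : achievable N D k -> achievable N D (f N D).
Proof.
move=> H; have hk : k < (N * N).+1.
  by case: H => T [E [_ <- _ _ <-]]; rewrite ltnS line_le.
rewrite /f (bigmax_eq_arg (Ordinal hk)) /=; last by apply/asboolP.
by case: arg_maxnP => [|i /asboolP]; first by apply/asboolP.
Qed.

Lemma f_zero N D : (forall k, achievable N D k -> k = 0) -> f N D = 0.
Proof.
by move=> H; apply/eqP; rewrite -leqn0; apply/bigmax_leqP => i /asboolP /H ->.
Qed.

Lemma f_mono N D N' D' c :
  (forall k, achievable N D k -> exists2 k', achievable N' D' k' & k + c <= k') ->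
  (0 < c -> exists2 k', achievable N' D' k' & c <= k') ->
  f N D + c <= f N' D'.
Proof.
move=> H1 H2; case: (pselect (exists k, achievable N D k)) => [[k /f_att /H1 [k' a le]]|nH].
  by apply: leq_trans le _; apply: f_ge.
rewrite f_zero ?add0n; last by move=> k a; case: nH; exists k.
case: c H1 H2 => // c _ /(_ isT) [k' a le]; by apply: leq_trans le (f_ge a).
Qed.

Ltac clear_all := repeat match goal with H : _ |- _ => clear H end.
Ltac clia := clear_all; lia.

Lemma split3 (T : finType) (F : T -> nat) p q r : p != q -> p != r -> q != r ->
  \sum_z F z = F p + F q + F r + \sum_(z | (z != p) && (z != q) && (z != r)) F z.
Proof.
move=> pq pr qr; rewrite (bigD1 p) //= (bigD1 q) /=; last by rewrite eq_sym.
rewrite (bigD1 r) /=; last by rewrite eq_sym pr eq_sym qr.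
by rewrite !addnA.
Qed.

Lemma sum3 (T : finType) (d d' : T -> nat) p q r : p != q -> p != r -> q != r ->
  (forall z, z != p -> z != q -> z != r -> 'C(d' z, 2) = 'C(d z, 2)) ->
  \sum_z 'C(d' z, 2) + ('C(d p, 2) + 'C(d q, 2) + 'C(d r, 2)) =
  \sum_z 'C(d z, 2) + ('C(d' p, 2) + 'C(d' q, 2) + 'C(d' r, 2)).
Proof.
move=> pq pr qr H; rewrite (split3 (fun z => 'C(d' z, 2)) pq pr qr) (split3 (fun z => 'C(d z, 2)) pq pr qr).
rewrite (eq_bigr (fun z => 'C(d z, 2))); first by clia.
by move=> z /andP[/andP[zp zq] zr]; apply: H.
Qed.

Lemma notin_iso (T : finType) (E : {set {set T}}) w (h : {set T}) : deg E w = 0 -> w \in h -> h \notin E.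
Proof. by move=> d0 wh; apply/negP => hE; have := deg_gt0 hE wh; rewrite d0. Qed.

Lemma simple_add (T : finType) (E : {set {set T}}) x y : simple_graph E -> x != y ->
  simple_graph ([set x; y] |: E).
Proof. by move=> sE xy e; rewrite in_setU1 => /orP[/eqP->|/sE //]; rewrite cards2 xy. Qed.

Lemma simple_del (T : finType) (E : {set {set T}}) g : simple_graph E -> simple_graph (E :\ g).
Proof. by move=> sE e; rewrite inE => /andP[_ /sE]. Qed.

Lemma C2S n : 'C(n.+1, 2) = 'C(n, 2) + n.
Proof. by rewrite binS bin1. Qed.

Lemma op_sub (T : finType) (E : {set {set T}}) w : simple_graph E -> deg E w = 0 ->
  0 < #|E| -> 2 <= maxdeg E -> ach' (#|E|.+1) (maxdeg E) (lsum E + 1).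
Proof.
move=> sE dw cE mE; case/card_gt0P: cE => g gE.
have /cards2P[a [b [ab eg]]] : #|g| == 2 by rewrite sE.
have ag : a \in g by rewrite eg !inE eqxx.
have bg : b \in g by rewrite eg !inE eqxx orbT.
have aw : a != w by apply: contraTneq (deg_gt0 gE ag) => ->; rewrite dw.
have bw : b != w by apply: contraTneq (deg_gt0 gE bg) => ->; rewrite dw.
pose h1 := [set a; w]; pose h2 := [set w; b].
pose E' := h1 |: (h2 |: (E :\ g)).
have h2n : h2 \notin E :\ g by rewrite inE negb_and (notin_iso dw) ?orbT // !inE eqxx.
have h1n : h1 \notin h2 |: (E :\ g).
  rewrite !inE negb_or negb_and (@notin_iso _ _ _ h1 dw) ?orbT ?andbT; last by rewrite !inE eqxx orbT.
  apply/eqP => e12; have : b \in h1 by rewrite e12 !inE eqxx orbT.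
  by rewrite !inE (negbTE bw) orbF eq_sym (negbTE ab).
have dE z : deg E' z + (z \in g) = (z \in h1) + (z \in h2) + deg E z.
  by rewrite /E' degU1 // degU1 // (degD1 z gE); clia.
have dw' : deg E' w = 2.
  have := dE w; rewrite dw eg !inE eqxx orbT (eq_sym w a) (eq_sym w b) (negbTE aw) (negbTE bw) /=; clia.
have dz z : z != w -> deg E' z = deg E z.
  move=> zw; have := dE z; rewrite eg !inE (negbTE zw) orbF.
  have [->|za] := eqVneq z a; first by rewrite (negbTE ab) /=; clia.
  have [->|zb] := eqVneq z b; first by rewrite /=; clia.
  by rewrite ?(negbTE za) ?(negbTE zb) /=; clia.
have [u du] := maxdeg_ex (leq_trans (isT : 0 < 2) mE).
have uw : u != w by apply/eqP => uw; move: mE; rewrite -du uw dw.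
exists T, E'; split.
- apply: simple_add; first apply: simple_add; [exact: simple_del | by rewrite eq_sym | by []].
- rewrite /E' cardsU1 h1n cardsU1 h2n (cardsD1 g E) gE; clia.
- apply: (maxdeg_eq (v := u)); last by rewrite dz.
  by move=> z; case: (z =P w) => [->|/eqP zw]; rewrite ?dw' ?dz ?deg_le_max.
- rewrite /lsum (bigD1 w) //= [in RHS](bigD1 w) //= dw' dw.
  rewrite (eq_bigr (fun z => 'C(deg E z, 2))); last by move=> z zw; rewrite dz.
  rewrite binn (@bin_small 0 2) //; clia.
Qed.

Lemma op_t1 (T : finType) (E : {set {set T}}) v x y : simple_graph E -> deg E v = maxdeg E ->
  [set x; y] \in E -> x != y -> v != x -> v != y -> [set v; x] \notin E ->
  exists2 k, ach' #|E| (maxdeg E).+1 k & lsum E + 1 <= k.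
Proof.
move=> sE dvm gE xy vx vy hE.
set g := [set x; y] in gE *; set h := [set v; x] in hE *.
pose E' := h |: (E :\ g).
have hn : h \notin E :\ g by rewrite inE negb_and hE orbT.
have dE z : deg E' z + (z \in g) = (z \in h) + deg E z.
  by rewrite /E' degU1 // (degD1 z gE) -addnA [deg _ _ + _]addnC.
have dv : deg E' v = (maxdeg E).+1.
  by have := dE v; move: dvm; rewrite /g /h !inE eqxx (negbTE vx) (negbTE vy) /=; clia.
have dx : deg E' x = deg E x.
  by have := dE x; rewrite /g /h !inE !eqxx !orbT /=; clia.
have dy : deg E' y + 1 = deg E y.
  by have := dE y; rewrite /g /h !inE !eqxx orbT (eq_sym y v) (eq_sym y x) (negbTE vy) (negbTE xy) /=; clia.
have dz z : z != v -> z != x -> z != y -> 'C(deg E' z, 2) = 'C(deg E z, 2).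
  move=> zv zx zy; have := dE z; rewrite /g /h !inE (negbTE zv) (negbTE zx) (negbTE zy) /=.
  by rewrite !addn0 => ->.
exists (lsum E').
  exists T, E'; split => //.
  - apply: simple_add => //; exact: simple_del.
  - by rewrite /E' cardsU1 hn [in RHS](cardsD1 g E) gE.
  - apply: (@maxdeg_eq _ E' v _ _ dv) => z; have := dE z; have := deg_le_max E z.
    case: (z \in h); case: (z \in g) => /=; clia.
have := @sum3 _ (deg E) (deg E') v x y vx vy xy dz.
rewrite -/(lsum E') -/(lsum E) dv dx -dy -dvm !addn1 !C2S.
have := deg_le_max E y; rewrite -dy; move: dvm; clia.
Qed.

Lemma count_ab (T : finType) (E : {set {set T}}) v a b : simple_graph E ->
  [set a; b] \in E -> a != b -> v != a -> v != b -> deg E a + deg E b + deg E v <= #|E| + 3.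
Proof.
move=> sE gE ab va vb.
have I1 : [set e in E | a \in e] :&: [set e in E | b \in e] = [set [set a; b]].
  apply/setP => e; rewrite !inE; apply/idP/eqP => [/andP[/andP[eE ae] /andP[_ be]]|->].
    exact: (edge_eq sE eE ae be ab).
  by rewrite gE !inE !eqxx ?orbT.
have c1 := cardsUI [set e in E | a \in e] [set e in E | b \in e]; rewrite I1 cards1 in c1.
have c2 := cardsUI ([set e in E | a \in e] :|: [set e in E | b \in e]) [set e in E | v \in e].
have s3 : #|([set e in E | a \in e] :|: [set e in E | b \in e]) :|: [set e in E | v \in e]| <= #|E|.
  by apply: subset_leq_card; apply/subsetP => e; rewrite !inE => /orP[/orP[]|] /andP[].
have s4 : #|([set e in E | a \in e] :|: [set e in E | b \in e]) :&: [set e in E | v \in e]| <= 2.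
  apply: leq_trans (_ : #|[set [set v; a]; [set v; b]]| <= 2); last by rewrite cards2; case: (_ != _).
  apply: subset_leq_card; apply/subsetP => e; rewrite !inE => /andP[/orP[]/andP[eE xe] /andP[_ ve]].
    by rewrite (edge_eq sE eE ve xe va) eqxx.
  by rewrite (edge_eq sE eE ve xe vb) eqxx orbT.
rewrite /deg; set Ua := [set e in E | a \in e] in c1 c2 s3 s4 *; set Ub := [set e in E | b \in e] in c1 c2 s3 s4 *; set Uv := [set e in E | v \in e] in c1 c2 s3 s4 *; move: c1 c2 s3 s4; clia.
Qed.

Lemma op_t2 (T : finType) (E : {set {set T}}) v w a b : simple_graph E -> deg E w = 0 ->
  deg E v = maxdeg E -> 0 < maxdeg E ->
  [set a; b] \in E -> a != b -> v != a -> v != b ->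
  exists2 k, ach' #|E| (maxdeg E).+1 k & lsum E + 2 * maxdeg E <= k + #|E| + 1.
Proof.
move=> sE dw dvm m0 gE ab va vb.
have cnt := count_ab sE gE ab va vb.
set g := [set a; b] in gE *.
have ag : a \in g by rewrite /g !inE eqxx.
have bg : b \in g by rewrite /g !inE eqxx orbT.
have aw : a != w by apply: contraTneq (deg_gt0 gE ag) => ->; rewrite dw.
have bw : b != w by apply: contraTneq (deg_gt0 gE bg) => ->; rewrite dw.
have vw : v != w by apply/eqP => vw; move: m0; rewrite -dvm vw dw.
pose h := [set v; w].
have hE : h \notin E by apply: (notin_iso dw); rewrite !inE eqxx orbT.
pose E' := h |: (E :\ g).
have hn : h \notin E :\ g by rewrite inE negb_and hE orbT.
have dE z : deg E' z + (z \in g) = (z \in h) + deg E z.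
  by rewrite /E' degU1 // (degD1 z gE) -addnA [deg _ _ + _]addnC.
have dv : deg E' v = (maxdeg E).+1.
  by have := dE v; move: dvm; rewrite /g /h !inE eqxx (negbTE va) (negbTE vb) /=; clia.
have da : deg E' a + 1 = deg E a.
  by have := dE a; rewrite /g /h !inE !eqxx (eq_sym a v) (negbTE va) (negbTE aw) /=; clia.
have db : deg E' b + 1 = deg E b.
  by have := dE b; rewrite /g /h !inE !eqxx orbT (eq_sym b v) (negbTE vb) (negbTE bw) /=; clia.
have dz z : z != v -> z != a -> z != b -> 'C(deg E' z, 2) = 'C(deg E z, 2).
  move=> zv za zb; have := dE z; rewrite /g /h !inE (negbTE zv) (negbTE za) (negbTE zb) /=.
  case: (z =P w) => [->|_] /=; last by rewrite !addn0 => ->.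
  by rewrite dw addn0 => ->.
exists (lsum E').
  exists T, E'; split => //.
  - apply: simple_add => //; exact: simple_del.
  - by rewrite /E' cardsU1 hn [in RHS](cardsD1 g E) gE.
  - apply: (@maxdeg_eq _ E' v _ _ dv) => z; have := dE z; have := deg_le_max E z.
    case: (z \in h); case: (z \in g) => /=; clia.
have := @sum3 _ (deg E) (deg E') v a b va vb ab dz.
rewrite -/(lsum E') -/(lsum E) dv -da -db -dvm !addn1 !C2S.
move: cnt; rewrite -da -db.
move: (lsum E) (lsum E') (deg E v) (deg E' a) (deg E' b) #|E| ('C(deg E v, 2)) ('C(deg E' a, 2)) ('C(deg E' b, 2)).
move=> L L' D A B N cD cA cB; clia.
Qed.

Lemma find_t1 (T : finType) (E : {set {set T}}) v : simple_graph E ->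
  'C((deg E v).+1, 2) < #|E| ->
  exists x y, [/\ [set x; y] \in E, x != y, v != x, v != y & [set v; x] \notin E].
Proof.
move=> sE lt.
case: (boolP [exists e in E, [exists x in e, (v \notin e) && ([set v; x] \notin E)]]).
  case/existsP => e /andP[eE /existsP[x /and3P[xe ve hE]]].
  have /cards2P[p [q [pq ee]]] : #|e| == 2 by rewrite sE.
  have vx : v != x by apply: contraNneq ve => ->.
  move: xe; rewrite ee !inE => /orP[]/eqP xp; subst x.
    exists p, q; split => //; first by rewrite -ee.
    by apply: contraNneq ve => ->; rewrite ee !inE eqxx orbT.
  exists q, p; split => //; first by rewrite setUC -ee.
    by rewrite eq_sym.
  by apply: contraNneq ve => ->; rewrite ee !inE eqxx.
rewrite negb_exists_in => /forallP H; exfalso.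
pose Nv := [set u | [set v; u] \in E].
have nv u : u \in Nv -> u != v.
  rewrite inE => uE; apply/eqP => uv; move: (sE _ uE); rewrite uv cards2 eqxx.
  by [].
have cNv : #|Nv| <= deg E v.
  rewrite -(card_in_imset (f := fun u => [set v; u]) (D := Nv)).
    apply: subset_leq_card; apply/subsetP => e /imsetP[u uN ->].
    by move: uN; rewrite !inE eqxx andbT.
  move=> u1 u2 u1N u2N /= eq; have : u1 \in [set v; u2] by rewrite -eq !inE eqxx orbT.
  by rewrite !inE (negbTE (nv _ u1N)) => /eqP.
have sub : E \subset [set e in E | v \in e] :|: [set F : {set T} | F \subset Nv & #|F| == 2].
  apply/subsetP => e eE; rewrite !inE eE /=.
  case: (boolP (v \in e)) => //= ve; rewrite sE // eqxx andbT.
  apply/subsetP => x xe; rewrite inE.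
  have := H e; rewrite eE /= negb_exists_in => /forallP /(_ x); rewrite xe ve /=.
  by rewrite negbK.
have := subset_leq_card sub; rewrite cardsU cards_draws.
have := leq_bin2l 2 cNv; move: lt; rewrite C2S /deg; clia.
Qed.

Lemma star_ach D : 1 <= D -> exists k, ach' D D k.
Proof.
move=> D1.
pose s (i : 'I_D) : {set option 'I_D} := [set None; Some i].
have si : injective s.
  move=> i j eq; have : Some i \in s j by rewrite -eq !inE eqxx orbT.
  by rewrite !inE => /eqP [].
pose E := [set s i | i in [set: 'I_D]].
have dN : deg E None = D.
  rewrite /deg -[RHS]card_ord -cardsT -(card_imset _ si); apply: eq_card => e.
  rewrite !inE; apply/andP/idP => [[]//|eE]; split => //.
  by case/imsetP: eE => i _ ->; rewrite !inE eqxx.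
have dS i : deg E (Some i) <= 1.
  apply: leq_trans (_ : #|[set s i]| <= 1); last by rewrite cards1.
  apply: subset_leq_card; apply/subsetP => e; rewrite !inE => /andP[/imsetP[j _ ->]].
  by rewrite !inE => /eqP [->].
exists (lsum E), _, E; split => //.
- by move=> e /imsetP[i _ ->]; rewrite cards2.
- by rewrite card_imset // cardsT card_ord.
- apply: (@maxdeg_eq _ E None _ _ dN) => [[i|]]; last by rewrite dN.
  exact: leq_trans (dS i) D1.
Qed.

Lemma ach'_pos N D k : ach' N D k -> 2 <= D -> 1 <= k.
Proof.
case=> T [E [_ _ mE <-]] D2.
have [v dv] : exists v, deg E v = maxdeg E by apply: maxdeg_ex; rewrite mE; move: D2; clia.
rewrite /lsum (bigD1 v) //= dv mE; apply: leq_trans (leq_addr _ _).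
by rewrite bin_gt0.
Qed.

Lemma exist_ach N D : 2 <= D -> D <= N -> exists k, ach' N D k.
Proof.
move=> D2; elim: N => [|N IH] DN; first by move: D2 DN; clia.
case: (eqVneq D N.+1) => [->|ne]; first by apply: star_ach.
have DN' : D <= N by move: DN ne; rewrite leq_eqVlt => /orP[->|] //.
have [k [T [E [sE cE mE lE]]]] := IH DN'.
have [T0 [E0 [w [s0 c0 m0 l0 d0]]]] := lift_graph sE.
have := op_sub s0 d0; rewrite c0 cE m0 mE => H.
exists (lsum E0 + 1); apply: H => //; move: D2 DN'; clia.
Qed.

Lemma edge_avoid (T : finType) (E : {set {set T}}) v : deg E v < #|E| -> exists2 g, g \in E & v \notin g.
Proof.
move=> lt; case: (boolP [exists g in E, v \notin g]) => [/existsP[g /andP[gE vg]]|]; first by exists g.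
rewrite negb_exists_in => /forallP H; exfalso.
suff : #|E| <= deg E v by move: lt; clia.
apply: subset_leq_card; apply/subsetP => e eE; rewrite inE eE /=.
by have := H e; rewrite eE negbK.
Qed.

Unset Implicit Arguments.
Set Strict Implicit.

Theorem mainTheorem11 (N : nat) (hN : 1 <= N) :
  [/\ f N 1 = 0,
      (forall D, 2 <= D <= N -> f N D + 1 <= f N.+1 D),
      (forall D, 1 <= D -> 'C(D.+1, 2) < N -> f N D + 1 <= f N D.+1)
    & (forall D, D.+1 <= N ->
         (N < 2 * D -> f N D <= f N D.+1) /\
         (uphalf N < D -> f N D + 1 <= f N D.+1))].
Proof.
split.
- apply: f_zero => k /ach_ach' [T [E [sE cE mE <-]]].
  rewrite /lsum big1 // => v _; apply: bin_small; have := deg_le_max E v; rewrite mE; clia.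
- move=> D /andP[D2 DN]; apply: f_mono.
  + move=> k /ach_ach' [T [E [sE cE mE <-]]].
    have [T0 [E0 [w [s0 c0 m0 l0 d0]]]] := lift_graph sE.
    have := op_sub s0 d0; rewrite c0 cE m0 mE l0 => H.
    exists (lsum E + 1) => //; apply: ach'_ach; apply: H => //; move: D2 DN; clia.
  + move=> _; have [k a] := exist_ach D2 (leqW DN).
    by exists k; [exact: ach'_ach | exact: ach'_pos a D2].
- move=> D D1 lt; apply: f_mono.
  + move=> k /ach_ach' [T [E [sE cE mE <-]]].
    have [v dv] : exists v, deg E v = maxdeg E by apply: maxdeg_ex; rewrite mE.
    have lt' : 'C((deg E v).+1, 2) < #|E| by rewrite dv mE cE.
    have [x [y [gE xy vx vy hE]]] := find_t1 sE lt'.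
    have [k' a le] := op_t1 sE dv gE xy vx vy hE.
    by exists k' => //; apply: ach'_ach; rewrite -cE -mE.
  + move=> _; have DN : D.+1 <= N by move: lt; rewrite C2S; clia.
    have D2 : 2 <= D.+1 by move: D1; clia.
    have [k a] := exist_ach D2 DN.
    by exists k; [exact: ach'_ach | exact: ach'_pos a D2].
- move=> D DN.
  have key k : achievable N D k -> 0 < D ->
      exists2 k', achievable N D.+1 k' & k + 2 * D <= k' + N + 1.
    move=> /ach_ach' [T [E [sE cE mE <-]]] D0.
    have [T0 [E0 [w [s0 c0 m0 l0 d0]]]] := lift_graph sE.
    have [v dv] : exists v, deg E0 v = maxdeg E0 by apply: maxdeg_ex; rewrite m0 mE.
    have lt' : deg E0 v < #|E0| by rewrite dv c0 m0 mE cE.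
    have [g gE vg] := edge_avoid lt'.
    have /cards2P[a [b [ab eg]]] : #|g| == 2 by rewrite s0.
    rewrite eg in gE vg.
    have va : v != a by apply: contraNneq vg => ->; rewrite !inE eqxx.
    have vb : v != b by apply: contraNneq vg => ->; rewrite !inE eqxx orbT.
    have m0' : 0 < maxdeg E0 by rewrite m0 mE.
    have [k' a' le] := op_t2 s0 d0 dv m0' gE ab va vb.
    rewrite c0 cE m0 mE l0 in a' le.
    by exists k' => //; apply: ach'_ach.
  split => lt.
  + rewrite -[f N D]addn0; apply: f_mono => // k /key [|k' a le]; first by move: lt hN; clia.
    by exists k' => //; move: lt le; clia.
  + apply: f_mono => [k /key [|k' a le]|_]; first by move: lt hN; clia.
      by exists k' => //; move: lt le; clia.
    have D2 : 2 <= D.+1 by move: lt; clia.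
    have [k a] := exist_ach D2 DN.
    by exists k; [exact: ach'_ach | exact: ach'_pos a D2].
Qed.
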